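(* Let $q$ be an odd prime power and $n\ge 1$. If $A\subset\mathbb{F}_q^n$ satisfies \[ |A|>2\binom{n+q-1}{q-1}+2\binom{n+\frac{q-1}{2}}{\frac{q-1}{2}}+2, \] then $A$ contains a right angle.
   Context: $\mathbb{F}_q^n$ carries the standard bilinear form $\langle u,v\rangle=\sum_{i=1}^n u_iv_i$. A right angle in $\mathbb{F}_q^n$ is a triple $x,y,z\in\mathbb{F}_q^n$ of pairwise distinct elements satisfying $\langle x-y,x-z\rangle=0$. *)

(* Defs.v *)
From HB Require Import structures.
From mathcomp Require Import all_boot all_order all_algebra all_field.
Set Implicit Arguments. Unset Strict Implicit. Unset Printing Implicit Defensive.
Import GRing.Theory.
Local Open Scope ring_scope.

Definition bform (F : fieldType) (n : nat) (u v : 'rV[F]_n) : F :=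
  \sum_(i < n) u 0 i * v 0 i.

Definition right_angle (F : fieldType) (n : nat) (x y z : 'rV[F]_n) : Prop :=
  [/\ x <> y, x <> z, y <> z & bform (x - y) (x - z) = 0].

(* Main.v *)
Require Import Defs.
From HB Require Import structures.
From mathcomp Require Import all_boot all_order all_algebra all_field.
From Stdlib Require Import Classical.
From mathcomp Require Import zify.

Set Implicit Arguments. Unset Strict Implicit. Unset Printing Implicit Defensive.
Import GRing.Theory.

Section Aux.
Local Open Scope ring_scope.
Variable F : fieldType.
Variables n d : nat.

Definition yv (v : 'rV[F]_n) (j : 'I_n.+1) : F :=
  if unlift ord0 j is Some k then v 0 k else 1.

Definition mono (t : seq 'I_n.+1) v := \prod_(j <- t) yv v j.

Definition rr := fun i j : 'I_n.+1 => (i <= j)%N.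

Lemma key_size (f : {ffun 'I_d -> 'I_n.+1}) : size (sort rr (codom f)) == d.
Proof. by rewrite size_sort size_codom card_ord. Qed.

Definition key f : d.-tuple 'I_n.+1 := Tuple (key_size f).

Definition Sset := [set t : d.-tuple 'I_n.+1 | sorted leq (map val t)].

Lemma key_in f : key f \in Sset.
Proof.
rewrite inE /= /rr.
have -> : (fun i j : 'I_n.+1 => (i <= j)%N) = relpre val leq by [].
rewrite -sort_map; apply: sort_sorted; exact: leq_total.
Qed.

Lemma mono_key f v : mono (key f) v = \prod_(i < d) yv v (f i).
Proof.
rewrite /mono /=.
rewrite (perm_big (codom f)); last by rewrite perm_sort.
by rewrite codomE big_map big_enum.
Qed.

Lemma expand (c : 'I_n.+1 -> F) v :
  (\sum_j c j * yv v j) ^+ d =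
  \sum_(t in Sset) (\sum_(f | key f == t) \prod_(i < d) c (f i)) * mono t v.
Proof.
have -> : (\sum_j c j * yv v j) ^+ d = \prod_(i < d) (\sum_j c j * yv v j).
  by rewrite prodr_const card_ord.
rewrite bigA_distr_bigA /=.
rewrite (partition_big key (mem Sset)) /=; last by move=> f _; exact: key_in.
apply: eq_bigr => t _; rewrite big_distrl /=; apply: eq_bigr => f /eqP <-.
by rewrite big_split /= mono_key.
Qed.

Definition cc (u : 'rV[F]_n) (j : 'I_n.+1) : F :=
  if unlift ord0 j is Some k then - u 0 k else bform u u.

Lemma lin u v : \sum_j cc u j * yv v j = bform u (u - v).
Proof.
rewrite big_ord_recl /cc /yv unlift_none.
under eq_bigr do rewrite liftK.
rewrite /bform mulr1.
under [in RHS]eq_bigr do rewrite !mxE mulrBr.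
rewrite sumrB; under eq_bigr do rewrite mulNr.
by rewrite sumrN.
Qed.

End Aux.

Lemma card_bound (F : finFieldType) (n : nat) (A : {set 'rV[F]_n}) x0 :
  x0 \in A ->
  (forall a b, a \in A -> b \in A -> a != x0 -> b != x0 -> a != b ->
     (bform (a - x0) (a - b) != 0)%R) ->
  (#|A :\ x0| <= 'C((#|F|).-1 + n, (#|F|).-1))%N.
Proof.
move=> Ax0 H.
Local Open Scope ring_scope.
set d := (#|F|).-1.
have d_gt0 : (0 < d)%N by rewrite /d -subn1 subn_gt0; apply: finNzRing_gt1.
have pow0 : forall z : F, z != 0 -> z ^+ d = 1.
  move=> z nz; apply: (mulIf nz); rewrite mul1r -exprSr /d prednK ?expf_card //.
  by apply: ltnW; apply: finNzRing_gt1.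
set A' := A :\ x0.
set N := #|A'|.
set S := Sset n d.
set t0 : d.-tuple 'I_n.+1 := [tuple of nseq d ord0].
have t0S : t0 \in S.
  rewrite inE /= map_nseq /=.
  have hs : forall k, sorted leq (nseq k 0%N) by case=> // k; elim: k.
  exact: hs.
pose u (i : 'I_N) := (enum_val i : 'rV[F]_n) - x0.
pose P : 'M[F]_(N, #|S|) := \matrix_(i, k)
   ((enum_val (k : 'I_#|S|) == t0)%:R -
     \sum_(f | key f == enum_val k) \prod_(i0 < d) cc (u i) (f i0)).
pose Q : 'M[F]_(#|S|, N) := \matrix_(k, j) mono (enum_val (k : 'I_#|S|) : d.-tuple 'I_n.+1) (u j).
have PQ : P *m Q = 1%:M.
  apply/matrixP => i j; rewrite !mxE.
  under eq_bigr do rewrite !mxE.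
  rewrite -(big_enum_val (A := pred_of_set S) (fun t => ((t == t0)%:R -
     \sum_(f | key f == t) \prod_(i0 < d) cc (u i) (f i0)) * mono t (u j))) /=.
  under eq_bigr do rewrite mulrBl.
  rewrite sumrB -expand lin.
  rewrite (bigD1 t0) //= eqxx mul1r big1; last first.
    by move=> t /andP[_ /negbTE ->]; apply: mul0r.
  rewrite addr0 /mono big_nseq.
  have -> : iter d (fun x => yv (u j) ord0 * x) 1 = 1.
    by rewrite /yv unlift_none; elim: (d) => //= k ->; rewrite mulr1.
  have -> : u i - u j = enum_val i - enum_val j.
    by rewrite /u opprB addrA subrK.
  have Hi := enum_valP i; have Hj := enum_valP j.
  rewrite !inE in Hi Hj; case/andP: Hi => Hi1 Hi2; case/andP: Hj => Hj1 Hj2.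
  case: (eqVneq i j) => [-> | nij].
    rewrite subrr /bform big1 ?expr0n; last by move=> k _; rewrite !mxE mulr0.
    by rewrite eqn0Ngt d_gt0 subr0.
  rewrite pow0 ?subrr //.
  apply: H => //.
  by apply: contra nij => /eqP /enum_val_inj ->.
have := mxrankM_maxl P Q.
rewrite PQ mxrank1 => h.
apply: (leq_trans h); apply: (leq_trans (rank_leq_col P)).
by rewrite card_sorted_tuples.
Qed.

Theorem theorem1 (F : finFieldType) (n : nat) (A : {set 'rV[F]_n}) :
  odd #|F| -> (1 <= n)%N ->
  (2 * 'C(n + #|F| - 1, #|F| - 1) + 2 * 'C(n + (#|F| - 1) %/ 2, (#|F| - 1) %/ 2) + 2
     < #|A|)%N ->
  exists x y z, [/\ x \in A, y \in A, z \in A & right_angle x y z].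
Proof.
move=> _ _ hA.
apply: NNPP => Hn.
have [x0 Ax0] : exists x0, x0 \in A.
  case: (set_0Vmem A) => [A0 | [x Ax]]; last by exists x.
  by rewrite A0 cards0 in hA.
have Hb : forall a b, a \in A -> b \in A -> a != x0 -> b != x0 -> a != b ->
     (bform (a - x0) (a - b) != 0)%R.
  move=> a b Aa Ab ax bx ab; apply/eqP => e; apply: Hn.
  exists a, x0, b; split => //; split => //; try exact/eqP.
  by apply/eqP; rewrite eq_sym.
have := card_bound Ax0 Hb.
rewrite (cardsD1 x0 A) Ax0 in hA.
have e : (n + #|F| - 1 = (#|F|).-1 + n)%N.
  have h1 : (0 < #|F|)%N by apply/card_gt0P; exists 0%R.
  by rewrite -subn1 -addnBA // addnC.
rewrite -e -subn1 => h.
move: hA; rewrite add1n ltnS => hA.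
move: hA h; move: #|A :\ x0| => N.
move: ('C(n + #|F| - 1, #|F| - 1)) => C.
move: ('C(n + (#|F| - 1) %/ 2, (#|F| - 1) %/ 2)) => C'.
clear; move=> h1 h2; have := leq_trans h1 h2.
rewrite -addnA -[X in (_ <= X)%N]addn0 mul2n -addnn -addnA leq_add2l.
by rewrite !addnS.
Qed.
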